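(* Consider the quantized sensor-network model described in the context, and fix $p\in\{1,\dots,P\}$. If the dimension $D_p$ of the attack parameter $\boldsymbol{\tau}^{(p)}$ satisfies $$D_p>\sum_{j\in\mathcal{A}_p}K_j\,(R_j-1),$$ then the matrix $\mathbf{J}_{\boldsymbol{\tau}^{(p)}}$ is singular, and moreover the Fisher information matrix $\mathbf{J}_{\boldsymbol{\Theta}}$ is also singular.
   Context: Sensors are indexed by $j\in\{1,\dots,N\}$. Sensor $j$ acquires $K_j$ scalar measurements $\tilde x_{jk}$, $k=1,\dots,K_j$, each quantized by an $R_j$-level quantizer with fixed disjoint regions $I_j^{(1)},\dots,I_j^{(R_j)}$ partitioning $\mathbb{R}$, producing $\tilde u_{jk}=\sum_{r=1}^{R_j} r\,\mathbb{1}\{\tilde x_{jk}\in I_j^{(r)}\}$. The sensor set is partitioned into disjoint sets $\mathcal{A}_0$ (unattacked sensors) and $\mathcal{A}_1,\dots,\mathcal{A}_P$ (attacked sensors, grouped by attack). There is an unknown deterministic parameter $\boldsymbol{\theta}\in\mathbb{R}^{D_{\boldsymbol\theta}}$ and unknown deterministic attack parameters $\boldsymbol{\tau}^{(p)}\in\mathbb{R}^{D_p}$, $p=1,\dots,P$. The measurements $\{\tilde x_{jk}\}$ are independent; $\tilde x_{jk}$ has pdf $f_{jk}(\cdot\mid\boldsymbol\theta)$ if $j\in\mathcal{A}_0$ and pdf $g_{jk}(\cdot\mid\boldsymbol\theta,\boldsymbol\tau^{(p)})$ if $j\in\mathcal{A}_p$, $p\ge1$. Let $p_{jr}^{(k)}=\Pr(\tilde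 u_{jk}=r)$, i.e. $p_{jr}^{(k)}=\int_{I_j^{(r)}}f_{jk}(x\mid\boldsymbol\theta)\,dx$ for $j\in\mathcal{A}_0$ and $p_{jr}^{(k)}=\int_{I_j^{(r)}}g_{jk}(x\mid\boldsymbol\theta,\boldsymbol\tau^{(p)})\,dx$ for $j\in\mathcal{A}_p$; these are assumed positive and differentiable in the parameters. Let $\boldsymbol\Theta=[\boldsymbol\theta^T,(\boldsymbol\tau^{(1)})^T,\dots,(\boldsymbol\tau^{(P)})^T]^T$. The Fisher information matrix of the quantized data $\{\tilde u_{jk}\}$ for $\boldsymbol\Theta$ is $\mathbf{J}_{\boldsymbol\Theta}=\sum_{j=1}^N\sum_{k=1}^{K_j}\sum_{r=1}^{R_j}\frac{1}{p_{jr}^{(k)}}\frac{\partial p_{jr}^{(k)}}{\partial\boldsymbol\Theta}\Big[\frac{\partial p_{jr}^{(k)}}{\partial\boldsymbol\Theta}\Big]^T$. For $p\ge1$, $\mathbf{J}_{\boldsymbol\tau^{(p)}}=\sum_{j\in\mathcal{A}_p}\sum_{k=1}^{K_j}\sum_{r=1}^{R_j}\frac{1}{p_{jr}^{(k)}}\frac{\partial p_{jr}^{(k)}}{\partial\boldsymbol\tau^{(p)}}\Big[\frac{\partial p_{jr}^{(k)}}{\partial\boldsymbol\tau^{(p)}}\Big]^T\in\mathbb{R}^{D_p\times D_p}$ (the diagonal block of $\mathbf{J}_{\boldsymbol\Theta}$ corresponding to $\boldsymbol\tau^{(p)}$). *)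

(* Defs.v *)
From HB Require Import structures.
From mathcomp Require Import all_boot all_order all_algebra.
From mathcomp Require Import all_classical all_reals all_analysis.
Set Implicit Arguments. Unset Strict Implicit. Unset Printing Implicit Defensive.
Import Order.TTheory GRing.Theory Num.Theory.
Import numFieldNormedType.Exports.
Local Open Scope classical_set_scope.
Local Open Scope ring_scope.

Section Defs.
Variable R : realType.

Definition cellprob (A : set R) (h : R -> R) : R :=
  fine (\int[@lebesgue_measure R]_(x in A) (h x)%:E)%E.

Definition is_pdf (h : R -> R) : Prop :=
  (forall x, 0 <= h x) /\ measurable_fun setT h /\
  (\int[@lebesgue_measure R]_x (h x)%:E = 1)%E.

Definition grad n (F : 'rV[R]_n -> R) (a : 'rV[R]_n) : 'cV[R]_n :=
  \col_(i < n) ('D_(delta_mx 0 i) F a).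

(* Full parameter Theta = [theta, tau^(1), ..., tau^(P)] as a row vector *)
Definition theta_of Dth P (D : 'I_P -> nat)
  (Th : 'rV[R]_(Dth + \sum_(p < P) D p)) : 'rV[R]_Dth := lsubmx Th.
Definition tau_of Dth P (D : 'I_P -> nat)
  (Th : 'rV[R]_(Dth + \sum_(p < P) D p)) (p : 'I_P) : 'rV[R]_(D p) :=
  submxrow (rsubmx Th) p.

(* Sensors 'I_N; sensor j makes K j measurements, quantizer with Rq j levels
   (levels indexed by 'I_(Rq j), i.e. r-1); regions Ireg j r.
   grp j = None  <-> j in A_0 ; grp j = Some p <-> j in A_p.
   f j k x theta : pdf of x_{jk} for unattacked j;
   g j k p x theta tau : pdf of x_{jk} for j in A_p. *)
Definition pQ N (K Rq : 'I_N -> nat) Dth P (D : 'I_P -> nat)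
  (grp : 'I_N -> option 'I_P)
  (Ireg : forall j, 'I_(Rq j) -> set R)
  (f : forall j, 'I_(K j) -> R -> 'rV[R]_Dth -> R)
  (g : forall j, 'I_(K j) -> forall p : 'I_P, R -> 'rV[R]_Dth -> 'rV[R]_(D p) -> R)
  (j : 'I_N) (k : 'I_(K j)) (r : 'I_(Rq j))
  (Th : 'rV[R]_(Dth + \sum_(p < P) D p)) : R :=
  match grp j with
  | None => cellprob (Ireg j r) (fun x => f j k x (theta_of Th))
  | Some p => cellprob (Ireg j r) (fun x => g j k p x (theta_of Th) (tau_of Th p))
  end.

Definition J_Theta N (K Rq : 'I_N -> nat) Dth P (D : 'I_P -> nat)
  grp Ireg f g (Th : 'rV[R]_(Dth + \sum_(p < P) D p))
  : 'M[R]_(Dth + \sum_(p < P) D p) :=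
  \sum_(j < N) \sum_(k < K j) \sum_(r < Rq j)
    (@pQ N K Rq Dth P D grp Ireg f g j k r Th)^-1 *:
      (grad (@pQ N K Rq Dth P D grp Ireg f g j k r) Th *m
       (grad (@pQ N K Rq Dth P D grp Ireg f g j k r) Th)^T).

Definition J_tau N (K Rq : 'I_N -> nat) Dth P (D : 'I_P -> nat)
  (grp : 'I_N -> option 'I_P) Ireg f g (p : 'I_P)
  (Th : 'rV[R]_(Dth + \sum_(p < P) D p)) : 'M[R]_(D p) :=
  \sum_(j < N | grp j == Some p) \sum_(k < K j) \sum_(r < Rq j)
    let gt := grad (fun t : 'rV[R]_(D p) =>
                 cellprob (Ireg j r) (fun x => g j k p x (theta_of Th) t))
               (tau_of Th p) in
    (@pQ N K Rq Dth P D grp Ireg f g j k r Th)^-1 *: (gt *m gt^T).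

End Defs.

(* Main.v *)
Require Import Defs.
From HB Require Import structures.
From mathcomp Require Import all_boot all_order all_algebra.
From mathcomp Require Import all_classical all_reals all_analysis.
From mathcomp Require Import measurable_realfun.
Import Order.TTheory GRing.Theory Num.Theory.
Import numFieldNormedType.Exports.
Local Open Scope classical_set_scope.
Local Open Scope ring_scope.

Lemma cellprob_sum (R : realType) n (A : 'I_n -> set R) (h : R -> R) :
  (forall r, measurable (A r)) ->
  (forall r s, r != s -> A r `&` A s = set0) ->
  (forall x, exists r, A r x) -> is_pdf h ->
  \sum_(r < n) cellprob (A r) h = 1.
Proof.
move=> mA dA cA [h0 [mh h1]].
have mhE : measurable_fun [set: R] (EFin \o h) by exact/measurable_EFinP.
have DT : \big[setU/set0]_(i <- index_enum 'I_n) A i = setT.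
  apply/seteqP; split => // x _; have [r Ar] := cA x.
  rewrite -bigcup_seq; exists r => //=; by rewrite mem_index_enum.
have H := @ge0_integral_bigsetU _ _ _ (@lebesgue_measure R) _ A (fun x => (h x)%:E)
   (index_enum 'I_n) mA (index_enum_uniq _).
rewrite /= DT in H.
have fin : forall i, (\int[@lebesgue_measure R]_(x in A i) (h x)%:E)%E \is a fin_num.
  move=> i; rewrite ge0_fin_numE; last by apply: integral_ge0 => x _; rewrite lee_fin.
  apply: (le_lt_trans (@ge0_subset_integral _ _ _ (@lebesgue_measure R) (A i) setT (mA i) measurableT _ mhE _ _)).
  + by move=> x _; rewrite lee_fin.
  + by [].
  + by rewrite h1 ltry.
rewrite /cellprob sum_fine; last by move=> i _; apply: fin.
rewrite -H ?h1 //.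
- move=> i j _ _ [x [Ai Aj]]; apply/eqP; apply: contraT => ij.
  by have := dA _ _ ij; rewrite -subset0 => /(_ x (conj Ai Aj)).
- by move=> x _; rewrite lee_fin.
Qed.
Definition embi Dth P (D : 'I_P -> nat) (p : 'I_P) (i : 'I_(D p)) :
  'I_(Dth + \sum_(q < P) D q) := rshift Dth (tagnat.Rank p i).

Lemma theta_shift (R : realType) Dth P (D : 'I_P -> nat) (p : 'I_P) (i : 'I_(D p)) (X : 'rV[R]_(Dth + \sum_(q < P) D q)) (h : R) :
  theta_of (h *: delta_mx 0 (@embi Dth P D p i) + X) = theta_of X.
Proof.
apply/matrixP => a b; rewrite /theta_of /embi !mxE eq_lrshift andbF mulr0 add0r.
by [].
Qed.

Lemma tau_shift_entry (R : realType) Dth P (D : 'I_P -> nat) (p : 'I_P) (i : 'I_(D p)) (X : 'rV[R]_(Dth + \sum_(q < P) D q)) (h : R) q l :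
  tau_of (h *: delta_mx 0 (@embi Dth P D p i) + X) q 0 l =
  h * ((q == p) && (l == i :> nat))%:R + tau_of X q 0 l.
Proof.
rewrite /tau_of /embi /submxrow !mxE eq_rshift.
by rewrite -[tagnat.Rank q l == _]val_eqE tagnat.eq_Rank.
Qed.

Lemma tau_shift_other (R : realType) Dth P (D : 'I_P -> nat) (p : 'I_P) (i : 'I_(D p)) (X : 'rV[R]_(Dth + \sum_(q < P) D q)) (h : R) q :
  q != p -> tau_of (h *: delta_mx 0 (@embi Dth P D p i) + X) q = tau_of X q.
Proof.
move=> qp; apply/matrixP => a l; rewrite (ord1 a) tau_shift_entry.
by rewrite (negbTE qp) mulr0 add0r.
Qed.

Lemma tau_shift_same (R : realType) Dth P (D : 'I_P -> nat) (p : 'I_P) (i : 'I_(D p)) (X : 'rV[R]_(Dth + \sum_(q < P) D q)) (h : R) :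
  tau_of (h *: delta_mx 0 (@embi Dth P D p i) + X) p = h *: delta_mx 0 i + tau_of X p.
Proof.
apply/matrixP => a l; rewrite (ord1 a) tau_shift_entry eqxx /=.
by rewrite !mxE eqxx.
Qed.

Lemma derive_line (R : realType) m n (f : 'rV[R]_m -> R) (g : 'rV[R]_n -> R) a b v w :
  (forall h : R, f (h *: v + a) = g (h *: w + b)) -> 'D_v f a = 'D_w g b.
Proof.
move=> H; have fg : f a = g b by have := H 0; rewrite !scale0r !add0r.
rewrite /derive fg.
suff -> : (fun h : R => h^-1 *: ((f \o shift a) (h *: v) - g b)) =
          (fun h : R => h^-1 *: ((g \o shift b) (h *: w) - g b)) by [].
by apply: funext => h /=; rewrite /shift /= H.
Qed.

Lemma rank_sumsmx_le (F : fieldType) (I : Type) (r : seq I) (P : pred I) n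
  (B : I -> 'M[F]_n) :
  (\rank (\sum_(i <- r | P i) B i)%MS <= \sum_(i <- r | P i) \rank (B i))%N.
Proof.
elim/big_rec2: _ => [|i A m _ IH]; first by rewrite mxrank0.
case: (mxrank_adds_leqif (B i) A) => le _.
by apply: leq_trans le _; rewrite leq_add2l.
Qed.

Theorem theorem1 (R : realType) (N : nat) (K Rq : 'I_N -> nat)
  (Dth P : nat) (D : 'I_P -> nat) (grp : 'I_N -> option 'I_P)
  (Ireg : forall j, 'I_(Rq j) -> set R)
  (f : forall j, 'I_(K j) -> R -> 'rV[R]_Dth -> R)
  (g : forall j, 'I_(K j) -> forall p : 'I_P, R -> 'rV[R]_Dth -> 'rV[R]_(D p) -> R)
  (* quantizer regions: measurable, pairwise disjoint, covering R *)
  (hmeas : forall j r, measurable (Ireg j r))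
  (hdisj : forall j (r s : 'I_(Rq j)), r != s -> Ireg j r `&` Ireg j s = set0)
  (hcover : forall j (x : R), exists r, Ireg j r x)
  (* the measurement densities are pdfs *)
  (hf : forall j k th, grp j = None -> is_pdf (fun x => f j k x th))
  (hg : forall j k p th t, grp j = Some p -> is_pdf (fun x => g j k p x th t))
  (* cell probabilities positive and differentiable in the parameters *)
  (hpos : forall j k r Th, 0 < @pQ R N K Rq Dth P D grp Ireg f g j k r Th)
  (hdiff : forall j k r Th,
     differentiable (@pQ R N K Rq Dth P D grp Ireg f g j k r) Th)
  (Th : 'rV[R]_(Dth + \sum_(p < P) D p)) (p : 'I_P) :
  (\sum_(j < N | grp j == Some p) K j * (Rq j - 1) < D p)%N ->
  (@J_tau R N K Rq Dth P D grp Ireg f g p Th) \notin unitmx /\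
  (@J_Theta R N K Rq Dth P D grp Ireg f g Th) \notin unitmx.
Proof.
move=> Hdim.
pose pq j k r := @pQ R N K Rq Dth P D grp Ireg f g j k r.
pose G j k r := grad (pq j k r) Th.
have Hsum1 : forall j k X, \sum_(r < Rq j) pq j k r X = 1.
  move=> j k X; rewrite /pq /pQ; case E: (grp j) => [q|].
  - by apply: cellprob_sum => //; [apply: hdisj | apply: hg].
  - by apply: cellprob_sum => //; [apply: hdisj | apply: hf].
have HG0 : forall j k a, \sum_(r < Rq j) G j k r a 0 = 0.
  move=> j k a; rewrite /G /grad.
  under eq_bigr => r _ do rewrite mxE.
  rewrite -derive_sum; last by move=> r; apply: diff_derivable; apply: hdiff.
  rewrite fct_sumE.
  have -> : (fun x => \sum_(r < Rq j) pq j k r x) = cst 1 by apply: funext => x; apply: Hsum1.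
  exact: derive_cst.
have HB : forall j k r (i : 'I_(D p)), grp j != Some p ->
    G j k r (@embi Dth P D p i) 0 = 0.
  move=> j k r i Hj; rewrite /G /grad mxE.
  rewrite (@derive_line _ _ _ _ (cst (pq j k r Th)) Th Th _ (delta_mx 0 (@embi Dth P D p i))).
    exact: derive_cst.
  move=> h /=; rewrite /pq /pQ; case E: (grp j) => [q|].
  - rewrite theta_shift tau_shift_other //.
    by apply: contraNneq Hj => <-; rewrite E.
  - by rewrite theta_shift.
have HC : forall j k r (i : 'I_(D p)), grp j = Some p ->
    grad (fun t : 'rV[R]_(D p) =>
                 cellprob (Ireg j r) (fun x => g j k p x (theta_of Th) t))
               (tau_of Th p) i 0 = G j k r (@embi Dth P D p i) 0.
  move=> j k r i Hj; rewrite /G /grad !mxE.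
  apply: derive_line => h.
  by rewrite /pq /pQ Hj theta_shift tau_shift_same.
pose U j k : 'M[R]_(Rq j, D p) := \matrix_(r, i) G j k r (@embi Dth P D p i) 0.
have HrU : forall j k, (\rank (U j k) <= Rq j - 1)%N.
  move=> j k; case: (posnP (Rq j)) => [E0|Hq].
    by apply: leq_trans (rank_leq_row _) _; rewrite E0.
  pose x : 'rV[R]_(Rq j) := const_mx 1.
  have x0 : x != 0.
    apply/eqP => /matrixP /(_ 0 (Ordinal Hq)); rewrite !mxE => /eqP.
    by rewrite oner_eq0.
  have xU : x *m U j k = 0.
    apply/matrixP => a b; rewrite !mxE.
    under eq_bigr => r _ do rewrite !mxE mul1r.
    rewrite -[RHS](HG0 j k (@embi Dth P D p b)); apply: eq_bigr => r _.
    by rewrite /G /grad mxE.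
  have := mxrankS (introT sub_kermxP xU); rewrite mxrank_ker rank_rV x0.
  by move=> H; rewrite subn_gt0 in H; rewrite leq_subRL ?add1n.
pose S := (\sum_(j | grp j == Some p) \sum_(k < K j) <<U j k>>)%MS.
have HrS : (\rank S < D p)%N.
  apply: leq_ltn_trans Hdim; rewrite /S.
  apply: leq_trans (@rank_sumsmx_le _ _ _ _ _ _) _.
  apply: leq_sum => j _; apply: leq_trans (@rank_sumsmx_le _ _ _ _ _ _) _.
  rewrite mulnC -iter_addn_0 -big_const_ord; apply: leq_sum => k _.
  by rewrite mxrank_gen.
have US : forall j k, grp j == Some p -> (U j k <= S)%MS.
  move=> j k Hj; apply: (sumsmx_sup j) => //.
  by apply: (sumsmx_sup k) => //; rewrite genmxE.
pose C := cokermx S.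
have C0 : C != 0.
  by rewrite -mxrank_eq0 mxrank_coker subn_eq0 -ltnNge.
have /matrix0Pn [a0 [c0 Hc0]] := C0.
pose v : 'cV[R]_(D p) := col c0 C.
have v0 : v a0 0 != 0 by rewrite /v mxE.
have Sv : S *m v = 0.
  apply/matrixP => a b; rewrite (ord1 b) /v !mxE.
  have := mulmx_coker S => /matrixP /(_ a c0); rewrite !mxE => H.
  rewrite -[RHS]H; apply: eq_bigr => l _; by rewrite !mxE.
have Horth : forall j k r, grp j == Some p ->
    \sum_(i < D p) G j k r (@embi Dth P D p i) 0 * v i 0 = 0.
  move=> j k r Hj; have /submxP [Dm HU] := US j k Hj.
  have : U j k *m v = 0 by rewrite HU -mulmxA Sv mulmx0.
  move=> /matrixP /(_ r 0); rewrite !mxE => H; rewrite -[RHS]H.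
  apply: eq_bigr => i _. rewrite /U. rewrite [in RHS]mxE. by [].
have vnz : v != 0 by apply/matrix0Pn; exists a0, 0.
split.
  apply/negP => Hu.
  suff Jv : (@J_tau R N K Rq Dth P D grp Ireg f g p Th) *m v = 0.
    by move: vnz; rewrite -(mulKmx Hu v) Jv mulmx0 eqxx.
  rewrite /J_tau mulmx_suml; apply: big1 => j Hj.
  rewrite mulmx_suml; apply: big1 => k _.
  rewrite mulmx_suml; apply: big1 => r _ /=.
  rewrite -scalemxAl -mulmxA.
  set gt := grad _ _.
  suff -> : gt^T *m v = 0 by rewrite mulmx0 scaler0.
  apply/matrixP => a b; rewrite (ord1 a) (ord1 b) [LHS]mxE [RHS]mxE.
  rewrite -[RHS](Horth j k r Hj); apply: eq_bigr => i _.
  rewrite [gt^T _ _]mxE /gt HC //; exact/eqP.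
pose w : 'cV[R]_(Dth + \sum_(q < P) D q) :=
  \sum_(i < D p) v i 0 *: delta_mx (@embi Dth P D p i) 0.
have Gw : forall j k r, (G j k r)^T *m w = 0.
  move=> j k r; rewrite /w mulmx_sumr.
  under eq_bigr => i _ do rewrite -scalemxAr -colE.
  apply/matrixP => a b; rewrite (ord1 a) (ord1 b) summxE [RHS]mxE.
  under eq_bigr => i _ do rewrite mxE [col _ _ _ _]mxE [_^T _ _]mxE.
  have [Hj|Hj] := boolP (grp j == Some p).
    by rewrite -[RHS](Horth j k r Hj); apply: eq_bigr => i _; rewrite mulrC.
  by apply: big1 => i _; rewrite HB // mulr0.
have wnz : w != 0.
  apply/matrix0Pn; exists (@embi Dth P D p a0), 0.
  suff -> : w (@embi Dth P D p a0) 0 = v a0 0 by [].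
  rewrite /w summxE (bigD1 a0) //= [X in _ + X]big1 ?addr0.
    by rewrite !mxE !eqxx mulr1.
  move=> i ia; rewrite !mxE eqxx andbT.
  rewrite /embi eq_rshift -val_eqE tagnat.eq_Rank eqxx /=.
  by rewrite eq_sym val_eqE (negbTE ia) mulr0.
apply/negP => Hu.
suff Jw : (@J_Theta R N K Rq Dth P D grp Ireg f g Th) *m w = 0.
  by move: wnz; rewrite -(mulKmx Hu w) Jw mulmx0 eqxx.
rewrite /J_Theta mulmx_suml; apply: big1 => j _.
rewrite mulmx_suml; apply: big1 => k _.
rewrite mulmx_suml; apply: big1 => r _ /=.
rewrite -scalemxAl -mulmxA.
by have := Gw j k r; rewrite /G /pq => ->; rewrite mulmx0 scaler0.
Qed.
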